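(* Let $H$ be a separable Hilbert space, $\mathbb{J}\subseteq\mathbb{Z}$, $\{H_j\}_{j\in\mathbb{J}}$ separable Hilbert spaces and $\Lambda_j\in\mathcal{B}(H,H_j)$ for $j\in\mathbb{J}$, such that $\{\Lambda_j\}_{j\in\mathbb{J}}$ is a g-frame for $H$ with respect to $\{H_j\}_{j\in\mathbb{J}}$. Let $S=\sum_{j\in\mathbb{J}}\Lambda_j^*\Lambda_j$ be its g-frame operator and $\tilde{\Lambda}_j:=\Lambda_jS^{-1}$. For $\mathbb{I}\subseteq\mathbb{J}$ define $S_{\mathbb{I}}f:=\sum_{j\in\mathbb{I}}\Lambda_j^*\tilde{\Lambda}_jf$ for $f\in H$, and let $\mathbb{I}^c=\mathbb{J}\setminus\mathbb{I}$. Then for every $f\in H$, $$\sum_{j\in\mathbb{I}}\langle \tilde{\Lambda}_j f,\Lambda_j f\rangle-\Vert S_{\mathbb{I}}f\Vert^2 =\sum_{j\in\mathbb{I}^c}\overline{\langle \tilde{\Lambda}_j f,\Lambda_j f\rangle}-\Vert S_{\mathbb{I}^c}f\Vert^2.$$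
   Context: A family $\{\Lambda_j\}_{j\in\mathbb{J}}$ with $\Lambda_j\in\mathcal{B}(H,H_j)$ is a g-frame for $H$ with respect to $\{H_j\}$ if there exist $0<A\le B<\infty$ with $A\Vert f\Vert^2\le\sum_{j\in\mathbb{J}}\Vert\Lambda_jf\Vert^2\le B\Vert f\Vert^2$ for all $f\in H$. Its g-frame operator $Sf=\sum_{j}\Lambda_j^*\Lambda_jf$ is bounded, positive and invertible; $\{\tilde{\Lambda}_j\}$ is the canonical dual g-frame. *)

(* Defs.v *)
From HB Require Import structures.
From mathcomp Require Import all_boot all_order all_algebra.
From mathcomp Require Import complex.
From mathcomp Require Import finmap.
From mathcomp Require Import all_classical all_reals all_analysis.
Import numFieldNormedType.Exports.
Import Order.TTheory GRing.Theory Num.Theory.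

Set Implicit Arguments.
Unset Strict Implicit.
Unset Printing Implicit Defensive.

Local Open Scope ring_scope.
Local Open Scope classical_set_scope.

Record HilbertSpace (R : realType) := {
  hcarrier :> completeNormedModType R[i];
  hip : hcarrier -> hcarrier -> R[i];
  hip_linear : forall (a : R[i]) (x y z : hcarrier),
      hip (a *: x + y) z = a * hip x z + hip y z;
  hip_conj : forall x y : hcarrier, hip x y = (hip y x)^*;
  hip_norm : forall x : hcarrier, hip x x = `|x| ^+ 2
}.

Arguments hip {R} h _ _.

Definition separable (R : realType) (H : HilbertSpace R) : Prop :=
  exists D : set H, countable D /\ closure D = setT.

Definition bounded_linear (R : realType) (H K : HilbertSpace R) (T : H -> K) : Prop :=
  (forall (a : R[i]) (x y : H), T (a *: x + y) = a *: T x + T y) /\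
  exists M : R[i], forall x : H, `|T x| <= M * `|x|.

Definition is_adjoint (R : realType) (H K : HilbertSpace R) (T : H -> K) (Ts : K -> H) : Prop :=
  forall (x : H) (y : K), hip K (T x) y = hip H x (Ts y).

Definition fin_net (I : set int) : set_system {fset int} :=
  fun P => exists A : {fset int}, [set` A] `<=` I /\
    forall B : {fset int}, (A `<=` B)%fset -> [set` B] `<=` I -> P B.

Definition psum (V : zmodType) (u : int -> V) (A : {fset int}) : V :=
  \sum_(j <- A) u j.

(* unconditional convergence / value of the series sum_{j in I} u j *)
Definition hsummable (K : numFieldType) (V : normedModType K) (I : set int) (u : int -> V) : Prop :=
  exists l : V, fmap (psum u) (fin_net I) --> l.

Definition hsum (K : numFieldType) (V : normedModType K) (I : set int) (u : int -> V) : V :=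
  lim (fmap (psum u) (fin_net I)).

(* scalar (complex) series, with C regarded as a normed space over itself *)
Definition csum (R : realType) (I : set int) (u : int -> R[i]) : R[i] :=
  @hsum R[i] (R[i])^o I u.
Definition csummable (R : realType) (I : set int) (u : int -> R[i]) : Prop :=
  @hsummable R[i] (R[i])^o I u.

Definition gframe (R : realType) (H : HilbertSpace R) (Hj : int -> HilbertSpace R)
  (J : set int) (Lam : forall j, H -> Hj j) : Prop :=
  exists A B : R[i], 0 < A /\ A <= B /\
    forall f : H,
      csummable J (fun j => `|Lam j f| ^+ 2 : R[i]) /\
      A * `|f| ^+ 2 <= csum J (fun j => `|Lam j f| ^+ 2 : R[i]) /\
      csum J (fun j => `|Lam j f| ^+ 2 : R[i]) <= B * `|f| ^+ 2.

Definition gframe_op (R : realType) (H : HilbertSpace R) (Hj : int -> HilbertSpace R)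
  (J : set int) (Lam : forall j, H -> Hj j) (Lams : forall j, Hj j -> H) : H -> H :=
  fun f => hsum J (fun j => Lams j (Lam j f)).

(* Main.v *)
Require Import Defs.
From HB Require Import structures.
From mathcomp Require Import all_boot all_order all_algebra.
From mathcomp Require Import complex.
From mathcomp Require Import finmap.
From mathcomp Require Import all_classical all_reals all_analysis.
From mathcomp Require Import ring.
Import numFieldNormedType.Exports.
Import Order.TTheory GRing.Theory Num.Theory.
Local Open Scope ring_scope.
Local Open Scope classical_set_scope.
Section Hil.
Variable R : realType.
Variable H : HilbertSpace R.
Local Notation ip := (hip H).

Lemma hip0l z : ip 0 z = 0.
Proof.
have := hip_linear 1 (0:H) 0 z; rewrite scale1r addr0 mul1r.
by move=> E; apply: (addrI (ip 0 z)); rewrite addr0 -E.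
Qed.

Lemma hipDl x y z : ip (x + y) z = ip x z + ip y z.
Proof. by have := hip_linear 1 x y z; rewrite scale1r mul1r. Qed.

Lemma hipZl a x z : ip (a *: x) z = a * ip x z.
Proof. by have := hip_linear a x 0 z; rewrite addr0 hip0l addr0. Qed.

Lemma hipNl x z : ip (- x) z = - ip x z.
Proof. by rewrite -scaleN1r hipZl mulN1r. Qed.

Lemma hipBl x y z : ip (x - y) z = ip x z - ip y z.
Proof. by rewrite hipDl hipNl. Qed.

Lemma hip0r z : ip z 0 = 0.
Proof. by rewrite hip_conj hip0l conjC0. Qed.

Lemma hipDr x y z : ip z (x + y) = ip z x + ip z y.
Proof. by rewrite (hip_conj z) hipDl rmorphD (hip_conj z x) (hip_conj z y). Qed.

Lemma hipZr a x z : ip z (a *: x) = a^* * ip z x.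
Proof. by rewrite (hip_conj z) hipZl rmorphM (hip_conj z x). Qed.

Lemma hipBr x y z : ip z (x - y) = ip z x - ip z y.
Proof. by rewrite -scaleN1r hipDr hipZr rmorphN1 mulN1r. Qed.

Lemma hip_suml (s : seq int) (F : int -> H) z :
  ip (\sum_(j <- s) F j) z = \sum_(j <- s) ip (F j) z.
Proof.
elim: s => [|a s IH]; first by rewrite !big_nil hip0l.
by rewrite !big_cons hipDl IH.
Qed.

Lemma hip_sumr (s : seq int) (F : int -> H) z :
  ip z (\sum_(j <- s) F j) = \sum_(j <- s) ip z (F j).
Proof.
elim: s => [|a s IH]; first by rewrite !big_nil hip0r.
by rewrite !big_cons hipDr IH.
Qed.

Lemma hip_CS x y : `|ip x y| <= `|x| * `|y|.
Proof.
have [->|y0] := eqVneq y 0.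
  by rewrite hip0r normr0 mulr_ge0.
set n := `|y| ^+ 2.
have n0 : n != 0 by rewrite /n expf_eq0 /= normr_eq0.
have nr : n^* = n by rewrite geC0_conj // /n exprn_ge0.
set c := ip x y.
set l := c / n.
have H0 : 0 <= ip (x - l *: y) (x - l *: y) by rewrite hip_norm exprn_ge0.
have Hyx : ip y x = c^* by rewrite hip_conj.
have Hyy : ip y y = n by rewrite hip_norm.
have Hxx : ip x x = `|x| ^+ 2 by rewrite hip_norm.
rewrite hipBl !hipBr !hipZl !hipZr Hyx Hyy Hxx -/c in H0.
have lc : l^* = c^* / n.
  rewrite /l rmorphM fmorphV; congr (_ / _); exact: nr.
rewrite lc /l in H0.
have E : `|x| ^+ 2 - c^* / n * c - (c / n * c^* - c / n * (c^* / n * n)) =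
   `|x| ^+ 2 - `|c| ^+ 2 / n.
  rewrite normCK; field; exact: n0.
rewrite E subr_ge0 ler_pdivrMr in H0; last by rewrite /n exprn_gt0 // normr_gt0.
rewrite -ler_sqr ?nnegrE ?mulr_ge0 //.
by rewrite exprMn.
Qed.

End Hil.
Lemma fin_net_proper (I : set int) : ProperFilter (fin_net I).
Proof.
split.
  by move=> [A [sA /(_ A (fsubset_refl _) sA)]].
split.
- exists fset0; split => //= x /=; by rewrite inE.
- move=> P Q [A1 [s1 h1]] [A2 [s2 h2]]; exists (A1 `|` A2)%fset; split.
    by move=> x /=; rewrite inE => /orP [] ?; [apply: s1|apply: s2].
  move=> B sB sBI; split.
    by apply: h1 => //; apply: fsubset_trans sB; apply: fsubsetUl.
  by apply: h2 => //; apply: fsubset_trans sB; apply: fsubsetUr.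
- move=> P Q PQ [A [sA h]]; exists A; split => // B sB sBI.
  by apply: PQ; apply: h.
Qed.
#[global] Existing Instance fin_net_proper.

Lemma fin_netP (I : set int) (P : {fset int} -> Prop) :
  fin_net I P <-> exists A : {fset int}, [set` A] `<=` I /\
    forall B : {fset int}, (A `<=` B)%fset -> [set` B] `<=` I -> P B.
Proof. by []. Qed.

Lemma psum_sub (V : zmodType) (u : int -> V) (A B : {fset int}) :
  (A `<=` B)%fset -> psum u B = psum u A + psum u (B `\` A)%fset.
Proof.
move=> AB; rewrite /psum (big_fsetID _ (mem A)) /=; congr (_ + _).
  apply: eq_fbigl => x; rewrite !inE /=.
  apply/andP/idP => [[]//|xA]; split => //; exact: (fsubsetP AB).
by apply: eq_fbigl => x; rewrite !inE /= andbC.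
Qed.
Lemma tail_small (K : numFieldType) (V : normedModType K) (J : set int)
  (u : int -> V) : hsummable J u -> forall e : K, 0 < e ->
  exists A : {fset int}, [set` A] `<=` J /\
   forall T : {fset int}, [set` T] `<=` J -> (forall x, x \in T -> x \notin A) ->
     `|psum u T| < e.
Proof.
move=> [l /cvgrPdist_lt hl] e e0.
have e20 : 0 < e / 2 by rewrite divr_gt0.
have [A [sA hA]] := hl _ e20.
exists A; split => // T sT dT.
have sAT : (A `<=` A `|` T)%fset by apply: fsubsetUl.
have sATJ : [set` (A `|` T)%fset] `<=` J.
  by move=> x /=; rewrite inE => /orP [] ?; [apply: sA|apply: sT].
have ET : ((A `|` T) `\` A)%fset = T.
  apply/fsetP => x; rewrite !inE.
  case xT: (x \in T); last by rewrite orbF; case: (x \in A).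
  by rewrite orbT andbT (dT _ xT).
have := @psum_sub _ u _ _ sAT; rewrite ET => E.
have -> : psum u T = (l - psum u A) - (l - psum u (A `|` T)%fset).
  by rewrite E opprB addrC subrKA [psum u A + _]addrC addrK.
apply: le_lt_trans (ler_normB _ _) _.
rewrite (splitr e) ltrD //; first exact: hA (fsubset_refl _) sA.
exact: hA.
Qed.
Lemma amgm4 (F : numDomainType) (c a b : F) : 0 <= c -> 0 <= a -> 0 <= b ->
  4 * c * (a * b) <= 4 * c * c * (a ^+ 2) + b ^+ 2.
Proof.
move=> c0 a0 b0; rewrite -subr_ge0.
have -> : 4 * c * c * a ^+ 2 + b ^+ 2 - 4 * c * (a * b) = (2 * c * a - b) ^+ 2
  by ring.
rewrite -realEsqr rpredB // ?ger0_real // ?mulr_ge0 //.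
Qed.

Lemma final_arith (F : numFieldType) (c X S : F) : 0 < c -> 0 <= X ->
  4 * c * X <= 4 * c * c * S + c * X -> X <= 4 * c * S.
Proof.
move=> c0 X0; rewrite -lerBlDr.
have -> : 4 * c * X - c * X = c * (3 * X) by ring.
have -> : 4 * c * c * S = c * (4 * c * S) by ring.
rewrite ler_pM2l // => h; apply: le_trans h.
by rewrite -subr_ge0 (_ : 3 * X - X = 2 * X) ?mulr_ge0 //; ring.
Qed.

Section Frame.
Variable R : realType.
Variable H : HilbertSpace R.
Variable Hj : int -> HilbertSpace R.
Variable J : set int.
Variable Lam : forall j, H -> Hj j.
Variable Lams : forall j, Hj j -> H.
Hypothesis hadj : forall j, J j -> is_adjoint (Lam j) (Lams j).
Variable Bb : R[i].
Hypothesis Bb0 : 0 <= Bb.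
Hypothesis hfr : forall f : H, csummable J (fun j => `|Lam j f| ^+ 2 : R[i]) /\
   csum J (fun j => `|Lam j f| ^+ 2 : R[i]) <= Bb * `|f| ^+ 2.

Lemma partial_le (g : H) (T : {fset int}) (e : R[i]) : [set` T] `<=` J -> 0 < e ->
  psum (fun j => `|Lam j g| ^+ 2 : R[i]) T <= Bb * `|g| ^+ 2 + e.
Proof.
move=> sT e0.
have [[l hl] hle] := hfr g.
rewrite /csum /hsum (cvg_lim _ hl) in hle; last exact: norm_hausdorff.
move: hl => /cvgrPdist_lt /(_ e e0) [A [sA hA]].
set u := (fun j => `|Lam j g| ^+ 2 : R[i]).
have sTB : (T `<=` A `|` T)%fset by apply: fsubsetUr.
have sBJ : [set` (A `|` T)%fset] `<=` J.
  by move=> x /=; rewrite inE => /orP [] ?; [apply: sA|apply: sT].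
have hw := hA _ (fsubsetUl _ _) sBJ.
have E := @psum_sub _ u _ _ sTB.
have pos : forall S : {fset int}, 0 <= psum u S.
  by move=> S; rewrite /psum sumr_ge0 // => j _; rewrite exprn_ge0.
set w := psum u (A `|` T)%fset in hw E.
have le1 : psum u T <= w by rewrite E lerDl pos.
have lreal : l \is Num.real.
  by rewrite (ler_real hle) ger0_real // mulr_ge0 // exprn_ge0.
have le2 : w <= l + e.
  have wr : w \is Num.real by rewrite ger0_real // /w pos.
  apply: real_ler_distlDr; first by rewrite rpredB.
  rewrite distrC ltW //.
apply: (le_trans le1); apply: (le_trans le2); by rewrite lerD2r.
Qed.


Lemma adj_swap j (y : Hj j) (v : H) : J j ->
  hip H (Lams j y) v = hip (Hj j) y (Lam j v).
Proof.
move=> Jj; rewrite hip_conj -(hadj _ Jj v y).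
by rewrite [in RHS]hip_conj.
Qed.

Lemma block_bound (g : H) (T : {fset int}) : [set` T] `<=` J ->
  `|psum (fun j => Lams j (Lam j g)) T| ^+ 2 <=
    4 * (Bb + 1) * psum (fun j => `|Lam j g| ^+ 2 : R[i]) T.
Proof.
move=> sT.
set v := psum (fun j => Lams j (Lam j g)) T.
set c := Bb + 1.
have c0 : 0 < c by rewrite /c ltr_wpDl.
set S := psum (fun j => `|Lam j g| ^+ 2 : R[i]) T.
have S0 : 0 <= S by rewrite /S /psum sumr_ge0 // => j _; rewrite exprn_ge0.
have [->|v0] := eqVneq v 0.
  by rewrite normr0 expr0n /= mulr_ge0 // mulr_ge0 // ltW.
set X := `|v| ^+ 2.
have X0 : 0 <= X by rewrite exprn_ge0.
set P := \sum_(j <- T) `|Lam j g| * `|Lam j v|.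
have st1 : X <= P.
  rewrite -{1}(ger0_norm X0).
  have -> : X = \sum_(j <- T) hip (Hj j) (Lam j g) (Lam j v).
    rewrite /X -hip_norm {1}/v /psum hip_suml.
    by apply: eq_big_seq => j jT; rewrite adj_swap //; apply: sT.
  apply: le_trans (ler_norm_sum _ _ _) _.
  by rewrite ler_sum // => j _; apply: hip_CS.
set Y := psum (fun j => `|Lam j v| ^+ 2 : R[i]) T.
have st2 : 4 * c * P <= 4 * c * c * S + Y.
  rewrite /P /S /Y /psum. rewrite mulr_sumr. rewrite mulr_sumr. rewrite -big_split /=.
  apply: ler_sum => j _; apply: (@amgm4 R[i]) => //; exact: ltW.
have st3 : Y <= c * X.
  have Xp : 0 < X by rewrite exprn_gt0 // normr_gt0.
  by have := @partial_le v T X sT Xp; rewrite /c mulrDl mul1r.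
apply: final_arith => //.
apply: (@le_trans _ _ (4 * c * P)).
  by rewrite ler_wpM2l // mulr_ge0 // ltW.
apply: (le_trans st2); by rewrite lerD2l.
Qed.
Lemma sum_conv (g : H) (I : set int) : I `<=` J ->
  hsummable I (fun j => Lams j (Lam j g)).
Proof.
move=> IJ; set u := (fun j => Lams j (Lam j g)).
exists (lim (psum u @ fin_net I)); apply: cauchy_cvg.
apply: cauchy_exP => eps eps0.
set c := Bb + 1.
have c0 : 0 < c by rewrite /c ltr_wpDl.
have d0 : 0 < eps ^+ 2 / (4 * c) by rewrite divr_gt0 ?exprn_gt0 // mulr_gt0.
have [A0 [sA0 hA0]] := @tail_small _ _ _ _ (proj1 (hfr g)) _ d0.
set A := [fset x in A0 | `[< I x >]]%fset.
exists (psum u A) => /=.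
exists A; split.
  by move=> x /=; rewrite !inE /= => /andP [_ /asboolP].
move=> B sAB sBI.
rewrite -ball_normE /=.
rewrite (@psum_sub _ u _ _ sAB) opprD addrA subrr add0r normrN.
set T := (B `\` A)%fset.
have sTJ : [set` T] `<=` J.
  by move=> x /=; rewrite !inE => /andP [_ xB]; apply: IJ; apply: sBI.
have dT : forall x, x \in T -> x \notin A0.
  move=> x; rewrite !inE => /andP [xA xB]; apply/negP => xA0.
  move: xA => /negP; apply; apply/andP; split => //; apply/asboolP; exact: sBI.
have h1 := hA0 T sTJ dT.
have h2 := @block_bound g T sTJ.
have Sn : 0 <= psum (fun j => `|Lam j g| ^+ 2 : R[i]) T.
  by rewrite /psum sumr_ge0 // => j _; rewrite exprn_ge0.
rewrite -(ltr_sqr (normr_ge0 _) (ltW eps0)).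
apply: (le_lt_trans h2).
rewrite -ltr_pdivlMl ?mulr_gt0 //.
rewrite mulrC.
apply: le_lt_trans h1.
by rewrite ger0_norm.
Qed.
End Frame.
Lemma net_sub (K : numFieldType) (V : normedModType K) (I0 J : set int)
  (p : pred int) (u : int -> V) (l : V) :
  (forall x, J x -> (I0 x <-> p x)) -> I0 `<=` J ->
  psum u @ fin_net I0 --> l ->
  (fun B : {fset int} => psum u [fset x in B | p x]%fset) @ fin_net J --> l.
Proof.
move=> hp sI hl N /hl [A [sA hA]]; exists A; split.
  by move=> x /sA /sI.
move=> B sAB sBJ; apply: hA.
  apply/fsubsetP => x xA; rewrite !inE; apply/andP; split.
    exact: (fsubsetP sAB).
  by apply/(hp x (sI _ (sA _ xA))); apply: sA.
move=> x /=; rewrite !inE => /andP [xB px].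
by apply/(hp x (sBJ _ xB)).
Qed.

Lemma split_lim (K : numFieldType) (V : normedModType K) (I J : set int)
  (u : int -> V) : I `<=` J -> hsummable I u -> hsummable (J `\` I) u ->
  hsum J u = hsum I u + hsum (J `\` I) u.
Proof.
move=> sIJ [lI hI] [lC hC].
rewrite /hsum (cvg_lim _ hI) ?(cvg_lim _ hC); try exact: norm_hausdorff.
apply: cvg_lim; first exact: norm_hausdorff.
have -> : psum u = (fun B : {fset int} => psum u [fset x in B | `[< I x >]]%fset +
                         psum u [fset x in B | ~~ `[< I x >]]%fset).
  by apply: funext => B; rewrite /psum (big_fsetID _ (fun x => `[< I x >])).
apply: cvgD.
  apply: net_sub hI => // x Jx; split; [by move=> ?; apply/asboolP|by move/asboolP].
apply: net_sub hC; last by move=> x [].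
move=> x Jx; split; first by move=> [_ nI]; apply/asboolP.
by move/asboolP => nI; split.
Qed.

Lemma lim_phi (R : realType) (H : HilbertSpace R) (I : set int)
  (u : int -> H) (w : int -> R[i]) (phi : H -> R[i]) (a : H) (M : R[i]) :
  0 <= M -> (forall x y, `|phi x - phi y| <= M * `|x - y|) ->
  (forall B : {fset int}, [set` B] `<=` I -> psum w B = phi (psum u B)) ->
  psum u @ fin_net I --> a -> csum I w = phi a.
Proof.
move=> M0 hM hw ha; rewrite /csum /hsum; apply: (@cvg_lim (R[i])^o (@norm_hausdorff _ _)).
apply/cvgrPdist_lt => eps eps0.
have M1 : 0 < M + 1 by rewrite ltr_wpDl.
have d0 : 0 < eps / (M + 1) by rewrite divr_gt0.
move: ha => /cvgrPdist_lt /(_ _ d0) [A [sA hA]].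
exists A; split => // B sAB sBI.
have h := hA B sAB sBI.
rewrite /= (hw B sBI).
apply: le_lt_trans (hM _ _) _.
apply: (@le_lt_trans _ _ ((M + 1) * `|a - psum u B|)).
  by rewrite ler_wpM2r // lerDl.
by rewrite -ltr_pdivlMl // mulrC.
Qed.
Lemma final_id (R : realType) (H : HilbertSpace R) (a b f : H) :
  f = a + b -> hip H a f - `|a| ^+ 2 = hip H f b - `|b| ^+ 2.
Proof.
move=> ->; rewrite hipDr hipDl !hip_norm.
by rewrite addrAC subrr add0r addrK.
Qed.

Theorem theorem3p1 (R : realType) (H : HilbertSpace R) (Hj : int -> HilbertSpace R)
  (J : set int) (Lam : forall j, H -> Hj j) (Lams : forall j, Hj j -> H)
  (Sinv : H -> H) (I : set int) :
  separable H ->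
  (forall j, J j -> separable (Hj j)) ->
  (forall j, J j -> bounded_linear (Lam j)) ->
  (forall j, J j -> is_adjoint (Lam j) (Lams j)) ->
  gframe J Lam ->
  cancel (gframe_op J Lam Lams) Sinv ->
  cancel Sinv (gframe_op J Lam Lams) ->
  I `<=` J ->
  let Ic := J `\` I in
  let Lamt := fun j (f : H) => Lam j (Sinv f) in
  let SI := fun (K : set int) (f : H) => hsum K (fun j => Lams j (Lamt j f)) in
  forall f : H,
    csum I (fun j => hip (Hj j) (Lamt j f) (Lam j f)) - `|SI I f| ^+ 2 =
    csum Ic (fun j => (hip (Hj j) (Lamt j f) (Lam j f))^*) - `|SI Ic f| ^+ 2.
Proof.
move=> _ _ _ hadj [A [Bb [A0 [AB hfr0]]]] _ hc2 sIJ Ic Lamt SI f.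
have Bb0 : 0 <= Bb by apply: le_trans AB; apply: ltW.
have hfr : forall f : H, csummable J (fun j => `|Lam j f| ^+ 2 : R[i]) /\
   csum J (fun j => `|Lam j f| ^+ 2 : R[i]) <= Bb * `|f| ^+ 2.
  by move=> h; have [? [? ?]] := hfr0 h.
set g := Sinv f.
set u := fun j => Lams j (Lam j g).
have sCJ : Ic `<=` J by move=> x [].
have [lI hI] := @sum_conv _ _ _ _ _ _ hadj _ Bb0 hfr g I sIJ.
have [lC hC] := @sum_conv _ _ _ _ _ _ hadj _ Bb0 hfr g Ic sCJ.
have eI : hsum I u = lI by apply: cvg_lim hI; exact: norm_hausdorff.
have eC : hsum Ic u = lC by apply: cvg_lim hC; exact: norm_hausdorff.
have hJ : hsum J u = hsum I u + hsum Ic u.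
  by apply: split_lim => //; [exists lI|exists lC].
have hf : f = hsum J u by rewrite -[LHS]hc2.
have -> : SI I f = hsum I u by [].
have -> : SI Ic f = hsum Ic u by [].
have -> : csum I (fun j => hip (Hj j) (Lamt j f) (Lam j f)) = hip H (hsum I u) f.
  apply: (@lim_phi R H I u _ (fun x => hip H x f) _ `|f|).
  - exact: normr_ge0.
  - by move=> x y; rewrite -hipBl mulrC hip_CS.
  - move=> B sB; rewrite /psum hip_suml; apply: eq_big_seq => j jB.
    by rewrite (@adj_swap _ _ _ _ _ _ hadj) //; apply: sIJ; apply: sB.
  - by rewrite eI.
have -> : csum Ic (fun j => (hip (Hj j) (Lamt j f) (Lam j f))^*) = hip H f (hsum Ic u).
  apply: (@lim_phi R H Ic u _ (fun x => hip H f x) _ `|f|).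
  - exact: normr_ge0.
  - by move=> x y; rewrite -hipBr hip_CS.
  - move=> B sB; rewrite /psum hip_sumr; apply: eq_big_seq => j jB.
    have Jj : J j by apply: sCJ; apply: sB.
    by rewrite -(hadj j Jj f (Lam j g)) [RHS]hip_conj.
  - by rewrite eC.
by apply: final_id; rewrite -hJ.
Qed.
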